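(* Let $0<\alpha<1$, $0\le\rho<1-(1+\alpha)^{-1/2}$, $\gamma=(1+\alpha)(1-\rho)^2-1$, $\sigma=(1-\rho)(2-\rho)^{-1}$, and let $\ell$ be a positive integer with $\ell\ge 4\gamma^{-1}$. Let $\mathcal{C}\subseteq[q]^n$ be a code and $S\subseteq[n]$ with $|S|=m$. If $\mathcal{C}_S$ is not $(\rho,\ell,\ell(1+\alpha))$-list recoverable, then there is a set $\mathcal{C}'\subseteq\mathcal{C}_S$ with $|\mathcal{C}'|\le 10\sqrt{\ell/\gamma}$ and $|T_S(\mathcal{C}')|\ge\sigma m/4$.
   Context: For $S\subseteq[n]$, $\mathcal{C}_S\subseteq[q]^S$ denotes the puncturing of $\mathcal{C}$ to $S$ (restriction of each codeword to coordinates in $S$). A code $\mathcal{D}\subseteq[q]^S$ is $(\rho,\ell,L)$-list recoverable if for all sets $A_i\subseteq[q]$ ($i\in S$) with $|A_i|\le\ell$, at most $L$ codewords $c\in\mathcal{D}$ differ from $\prod_{i\in S}A_i$ in at most $\rho|S|$ coordinates (i.e. have $c[i]\notin A_i$ for at most $\rho|S|$ indices $i\in S$). For $\mathcal{C}'\subseteq\mathcal{C}_S$, $T_S(\mathcal{C}')$ is the set of coordinates $i\in S$ for which there exist two distinct $c_1,c_2\in\mathcal{C}'$ with $c_1[i]=c_2[i]$. *)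

(* Defs.v *)
From HB Require Import structures.
From mathcomp Require Import all_boot all_order all_algebra.
From mathcomp Require Import reals.
Set Implicit Arguments. Unset Strict Implicit. Unset Printing Implicit Defensive.
Import Order.TTheory GRing.Theory Num.Theory.

(* A word of [q]^S (S a set of coordinates) is
   represented as a function 'I_n -> option 'I_q which is Some _ exactly on S
   and None outside S. *)
Definition word (n q : nat) := {ffun 'I_n -> 'I_q}.
Definition sword (n q : nat) := {ffun 'I_n -> option 'I_q}.

Definition restrict n q (S : {set 'I_n}) (c : word n q) : sword n q :=
  [ffun i => if i \in S then Some (c i) else None].

Definition puncture n q (C : {set word n q}) (S : {set 'I_n}) : {set sword n q} :=
  restrict S @: C.

Definition disagree n q (S : {set 'I_n}) (A : 'I_n -> {set 'I_q}) (c : sword n q)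
  : {set 'I_n} :=
  [set i in S | match c i with Some x => x \notin A i | None => true end].

Definition list_recoverable (R : realType) n q (S : {set 'I_n})
  (D : {set sword n q}) (rho : R) (l : nat) (L : R) : Prop :=
  forall A : 'I_n -> {set 'I_q},
    (forall i, i \in S -> #|A i| <= l)%N ->
    (#|[set c in D | (#|disagree S A c|%:R <= rho * #|S|%:R)%R]|%:R <= L)%R.

Definition collide n q (S : {set 'I_n}) (C' : {set sword n q}) : {set 'I_n} :=
  [set i in S | [exists c1 in C', exists c2 in C', (c1 != c2) && (c1 i == c2 i)]].

(* Main.v *)
Require Import Defs.
From mathcomp Require Import all_boot all_order all_algebra reals.
From mathcomp Require Import zify ring lra.
From Stdlib Require Import Classical.
Import Order.TTheory GRing.Theory Num.Theory.
Set Implicit Arguments. Unset Strict Implicit. Unset Printing Implicit Defensive.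
Section Count.
Variable T : finType.

Lemma count_super (D B : {set T}) t :
  B \subset D -> (#|B| <= t)%N ->
  #|[set A : {set T} | [&& A \subset D, #|A| == t & B \subset A]]| =
  'C(#|D| - #|B|, t - #|B|).
Proof.
move=> BD Bt.
have cDB : #|D :\: B| = #|D| - #|B| by rewrite cardsD (setIidPr BD).
rewrite -cDB -cards_draws.
set X := [set A : {set T} | A \subset D :\: B & #|A| == t - #|B|].
have dis (A : {set T}) : A \subset D :\: B -> [disjoint A & B].
  move=> s; rewrite -setI_eq0; apply/eqP/setP=> x; rewrite !inE.
  by apply/andP=> -[/(subsetP s)]; rewrite !inE => /andP[/negbTE ->].
have inj : {in X &, injective (fun A => A :|: B)}.
  move=> A1 A2; rewrite !inE => /andP[s1 _] /andP[s2 _] e.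
  apply/setP=> x; have := congr1 (fun A : {set T} => x \in A) e => /=; rewrite !inE.
  case xB: (x \in B); last by rewrite !orbF.
  by rewrite (disjointFl (dis _ s1) xB) (disjointFl (dis _ s2) xB).
rewrite -(card_in_imset inj); apply: eq_card => A.
rewrite inE; apply/and3P/imsetP.
- case=> AD /eqP At BA; exists (A :\: B).
    rewrite inE setSD //= cardsD (setIidPr BA) At eqxx //.
  apply/setP=> x; rewrite !inE; case xB: (x \in B) => //=.
  - by rewrite (subsetP BA).
  - by rewrite orbF.
- case=> A' ; rewrite inE => /andP[s /eqP c] ->; split.
  + rewrite subUset BD andbT; apply: subset_trans s _; exact: subsetDl.
  + rewrite cardsU (disjoint_setI0 (dis _ s)) cards0 subn0 c subnK //.
  + exact: subsetUr.
Qed.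
End Count.
Section Match.
Variables (T U : finType) (g : T -> U).

Lemma matching K (X : {set T}) : exists E : {set T * T},
 [/\ forall e, e \in E -> [/\ e.1 \in X, e.2 \in X, e.1 != e.2 & g e.1 = g e.2],
     forall e e', e \in E -> e' \in E -> e != e' ->
        [disjoint [set e.1; e.2] & [set e'.1; e'.2]],
     (#|E| <= K)%N &
     (#|E| = K \/ (#|X| <= 2 * #|E| + #|g @: X|)%N)].
Proof.
move: {2}#|X| (leqnn #|X|) => k; elim: k K X => [|k IH] K X Xk.
  exists set0; rewrite cards0; split=> //; try by move=> e; rewrite inE.
  by right; move: Xk; rewrite leqn0 => /eqP ->.
case: K => [|K].
  exists set0; rewrite cards0; split=> //; try by move=> e; rewrite inE.
  by left.
case: (boolP [forall x in X, forall y in X, (g x == g y) ==> (x == y)]) => [inj|ninj].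
  exists set0; rewrite cards0; split=> //; try by move=> e; rewrite inE.
  right; rewrite card_in_imset //= => x y xX yX gxy.
  by move/forall_inP: inj => /(_ x xX) /forall_inP /(_ y yX) /implyP /(_ (introT eqP gxy)) /eqP.
have [x [y [xX yX xy gxy]]] : exists x y, [/\ x \in X, y \in X, x != y & g x = g y].
  move: ninj; rewrite negb_forall_in => /exists_inP[x xX].
  rewrite negb_forall_in => /exists_inP[y yX]; rewrite negb_imply => /andP[/eqP gxy xy].
  by exists x, y.
set X' := X :\: [set x; y].
have cX' : #|X'| = (#|X| - 2)%N.
  rewrite cardsD (setIidPr _); last by rewrite subUset !sub1set xX yX.
  by rewrite cards2 xy.
have X'k : (#|X'| <= k)%N.
  have : (2 <= #|X|)%N.
    have := subset_leq_card (_ : [set x; y] \subset X); rewrite cards2 xy; apply.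
    by rewrite subUset !sub1set xX yX.
  lia.
have [E' [E'1 E'2 E'3 E'4]] := IH K X' X'k.
have xyE' : (x, y) \notin E'.
  by apply/negP=> /E'1 [] /=; rewrite !inE eqxx.
exists ((x, y) |: E'); split.
- move=> e; rewrite in_setU1 => /orP[/eqP -> /=|/E'1 [h1 h2 h3 h4]]; first by [].
  by split=> //; [move: h1 | move: h2]; rewrite inE => /andP[].
- have key e : e \in E' -> [disjoint [set x; y] & [set e.1; e.2]].
    move=> /E'1 [h1 h2 _ _]; rewrite -setI_eq0; apply/eqP/setP=> z; rewrite !inE.
    apply/negP => /andP[zxy /orP[] /eqP ze]; [move: h1 | move: h2];
      by rewrite -ze !inE zxy.
  move=> e e'; rewrite !in_setU1 => /orP[/eqP ->|eE] /orP[/eqP ->|e'E] //=; first by rewrite eqxx.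
  + by move=> _; apply: key.
  + by move=> _; rewrite disjoint_sym; apply: key.
  + exact: E'2.
- by rewrite cardsU1 xyE'.
- rewrite cardsU1 xyE' /=; case: E'4 => [->|h]; [by left|right].
  have : (#|g @: X'| <= #|g @: X|)%N by apply: subset_leq_card; apply: imsetS; apply: subsetDl.
  have : (2 <= #|X|)%N.
    have := subset_leq_card (_ : [set x; y] \subset X); rewrite cards2 xy; apply.
    by rewrite subUset !sub1set xX yX.
  rewrite cX' in h; move=> H2 H3. have HH : (#|X| <= 2 * (1 + #|E'|) + #|g @: X|)%N by lia. exact HH.
Qed.
End Match.
Lemma bin2step N s : 'C(N, s.+2) * (s.+2 * s.+1) = N * (N - 1) * 'C(N - 2, s).
Proof.
have h1 := mul_bin_diag N s.+1.
have h2 := mul_bin_diag N.-1 s.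
have e1 : N.-1 = (N - 1)%N by lia.
have e2 : N.-1.-1 = (N - 2)%N by lia.
rewrite e2 e1 in h2; rewrite e1 in h1.
rewrite mulnA [_ * s.+2]mulnC -h1 -mulnA [_ * s.+1]mulnC -h2.
by rewrite !mulnA.
Qed.

Lemma binratio N t : (4 <= t <= N)%N ->
  'C(N, t) * 'C(N - 4, t - 4) <= 'C(N - 2, t - 2) ^ 2.
Proof.
case/andP=> t4 tN.
have [s es] : exists s, t = s.+4 by exists (t - 4); lia.
subst t.
have -> : (s.+4 - 4 = s)%N by lia.
have -> : (s.+4 - 2 = s.+2)%N by lia.
set Phi := 'C(N, s.+4); set P2 := 'C(N - 2, s.+2); set P4 := 'C(N - 4, s).
have ha : Phi * (s.+4 * s.+3) = N * (N - 1) * P2 by rewrite /Phi bin2step.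
have hb : P2 * (s.+2 * s.+1) = (N - 2) * (N - 3) * P4.
  rewrite /P2 bin2step /P4; have -> : (N - 2 - 1 = N - 3)%N by lia.
  by have -> : (N - 2 - 2 = N - 4)%N by lia.
have pos : (0 < s.+4 * s.+3 * ((N - 2) * (N - 3)))%N.
  rewrite !muln_gt0; lia.
rewrite -(leq_pmul2l pos).
have -> : s.+4 * s.+3 * ((N - 2) * (N - 3)) * (Phi * P4) =
   (Phi * (s.+4 * s.+3)) * ((N - 2) * (N - 3) * P4) by ring.
rewrite ha -hb.
have i1 : (N * s.+2 <= s.+4 * (N - 2))%N by nia.
have i2 : ((N - 1) * s.+1 <= s.+3 * (N - 3))%N by nia.
have := leq_mul i1 i2 => i3.
have -> : N * (N - 1) * P2 * (P2 * (s.+2 * s.+1)) =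
   (N * s.+2) * ((N - 1) * s.+1) * P2 ^ 2 by ring.
have -> : s.+4 * s.+3 * ((N - 2) * (N - 3)) * P2 ^ 2 =
   (s.+4 * (N - 2)) * (s.+3 * (N - 3)) * P2 ^ 2 by ring.
by rewrite leq_mul2r i3 orbT.
Qed.
Section Core.
Variables (T I U : finType) (val : I -> T -> U) (D0 : {set T}) (S : {set I})
  (X : I -> {set T}) (l t : nat).
Hypotheses (XD : forall i, i \in S -> X i \subset D0)
  (Xl : forall i, i \in S -> (#|val i @: X i| <= l)%N)
  (t4 : (4 <= t)%N) (tN : (t <= #|D0|)%N) (lN : (l < #|D0|)%N)
  (key : (#|D0| * (#|D0| - 1) <= t * (t - 1) * (#|D0| - l))%N).

Definition cov (A : {set T}) := [set i in S | [exists c1 in A, exists c2 in A,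
   (c1 != c2) && (val i c1 == val i c2)]].

Let N := #|D0|.
Let Phi := 'C(N, t).
Let P2 := 'C(N - 2, t - 2).
Let P4 := 'C(N - 4, t - 4).
Let F := [set A : {set T} | (A \subset D0) && (#|A| == t)].

Lemma hsum (B : {set T}) : B \subset D0 -> (#|B| <= t)%N ->
  \sum_(A in F) (B \subset A : nat) = 'C(N - #|B|, t - #|B|).
Proof.
move=> BD Bt; rewrite -count_super // -sum1_card.
rewrite [RHS]big_mkcond [LHS]big_mkcond; apply: eq_bigr => A _; rewrite !inE.
by case: (A \subset D0); case: (#|A| == t); case: (B \subset A).
Qed.

Lemma cardF : #|F| = Phi.
Proof.
rewrite /Phi; have := hsum (sub0set D0); rewrite cards0 !subn0 => <-.
rewrite -sum1_card; apply: eq_bigr => A _; by rewrite sub0set.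
by [].
Qed.

Lemma Phi_pos : (0 < Phi)%N. Proof. by rewrite bin_gt0. Qed.
Lemma P2_pos : (0 < P2)%N. Proof. rewrite bin_gt0; lia. Qed.

Lemma ha : Phi * (t * (t - 1)) = N * (N - 1) * P2.
Proof.
have [s es] : exists s, t = s.+2 by exists (t - 2); lia.
rewrite /Phi /P2 es bin2step; do 2 f_equal; lia.
Qed.

Lemma P2_le : (P2 <= Phi)%N.
Proof.
have pos : (0 < t * (t - 1))%N by rewrite muln_gt0; lia.
rewrite -(leq_pmul2r pos) ha mulnC leq_mul2r; apply/orP; right.
by apply: leq_mul; lia.
Qed.

Let K := Phi %/ P2.

Lemma KP4 : (K * P4 <= P2)%N.
Proof.
rewrite -(leq_pmul2r P2_pos).
apply: leq_trans (binratio _) ; last by rewrite t4.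
rewrite mulnAC; apply: leq_mul => //; exact: leq_trunc_div.
Qed.

Lemma twoK : (Phi <= 2 * K * P2)%N.
Proof.
have h1 := divn_eq Phi P2; have h2 := ltn_pmod Phi P2_pos.
have h3 : (1 <= K)%N by rewrite divn_gt0 ?P2_pos // P2_le.
rewrite -/K in h1; rewrite {1}h1; nia.
Qed.

Lemma P2l : (Phi <= P2 * (N - l))%N.
Proof.
have pos : (0 < t * (t - 1))%N by rewrite muln_gt0; lia.
rewrite -(leq_pmul2r pos) ha.
have -> : P2 * (N - l) * (t * (t - 1)) = (t * (t - 1) * (N - l)) * P2 by ring.
by rewrite leq_mul2r key orbT.
Qed.


Lemma per_i i (E : {set T * T}) : i \in S ->
 (forall e, e \in E -> [/\ e.1 \in X i, e.2 \in X i, e.1 != e.2 & val i e.1 = val i e.2]) ->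
 (forall e e', e \in E -> e' \in E -> e != e' ->
        [disjoint [set e.1; e.2] & [set e'.1; e'.2]]) ->
 (#|E| <= K)%N ->
 (#|E| * P2 <= 2 * \sum_(A in F) (i \in cov A))%N.
Proof.
move=> iS E1 E2 EK.
pose pe (e : T * T) := [set e.1; e.2].
pose Y (A : {set T}) := \sum_(e in E) (pe e \subset A : nat).
have peD e : e \in E -> pe e \subset D0.
  move=> /E1 [h1 h2 _ _]; apply: subset_trans (XD iS).
  by rewrite subUset !sub1set h1 h2.
have pe2 e : e \in E -> #|pe e| = 2.
  by move=> /E1 [_ _ h _]; rewrite cards2 h.
have pe4 e e' : e \in E -> e' \in E -> e != e' -> #|pe e :|: pe e'| = 4.
  move=> eE e'E ee'; rewrite cardsU (disjoint_setI0 (E2 _ _ eE e'E ee')) cards0.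
  by rewrite pe2 // pe2.
have pa A : (3 * Y A <= 2 * (i \in cov A) + Y A ^ 2)%N.
  case cA: (i \in cov A).
    rewrite /= muln1; case: (Y A) => [|[|[|y]]] //; nia.
  suff -> : Y A = 0%N by [].
  apply: big1 => e eE; apply/eqP; rewrite eqb0; apply/negP => sA.
  move/negbT: cA; rewrite inE iS /=; apply/negP/negPn.
  have [h1 h2 h3 h4] := E1 _ eE.
  apply/exists_inP; exists e.1; first by apply: (subsetP sA); rewrite !inE eqxx.
  apply/exists_inP; exists e.2; first by apply: (subsetP sA); rewrite !inE eqxx orbT.
  by rewrite h3 h4 eqxx.
have pb : \sum_(A in F) Y A = #|E| * P2.
  rewrite exchange_big /= -sum_nat_const; apply: eq_bigr => e eE.
  by rewrite hsum ?peD // pe2 // (leq_trans _ t4).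
have pc : \sum_(A in F) Y A ^ 2 = #|E| * (P2 + (#|E| - 1) * P4).
  have -> : \sum_(A in F) Y A ^ 2 = \sum_(A in F) \sum_(e in E) \sum_(e' in E) (pe e :|: pe e' \subset A : nat).
    apply: eq_bigr => A _; rewrite expnS expn1 /Y big_distrlr /=; apply: eq_bigr => e _.
    by apply: eq_bigr => e' _; rewrite subUset mulnb.
  rewrite exchange_big /= -sum_nat_const; apply: eq_bigr => e eE.
  rewrite exchange_big /= (bigD1 e) //= setUid hsum ?peD // ?pe2 // ?(leq_trans _ t4) //.
  congr (_ + _); rewrite (eq_bigr (fun _ => P4)); last first.
    move=> e' /andP[e'E ne].
    have B4 : #|pe e :|: pe e'| = 4 by apply: pe4; rewrite // eq_sym.
    by rewrite hsum ?B4 // subUset !peD.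
  rewrite sum_nat_const; congr (_ * _).
  rewrite (cardD1 e E) eE add1n subn1 /=; apply: eq_card => x; rewrite !inE andbC.
  by [].
have sa : (\sum_(A in F) 3 * Y A <= \sum_(A in F) (2 * (i \in cov A) + Y A ^ 2))%N.
  by apply: leq_sum => A _; exact: pa.
rewrite -big_distrr /= big_split /= -big_distrr /= pb pc in sa.
have k1 : ((#|E| - 1) * P4 <= P2)%N.
  apply: leq_trans KP4; apply: leq_mul => //; lia.
have k2 := leq_mul (leqnn #|E|) k1.
move: sa k2; rewrite mulnDr; set c := \sum_(_ in F) _; move=> sa k2. have HH : (#|E| * P2 <= 2 * c)%N by lia. exact HH.
Qed.

Lemma core : exists A : {set T}, [/\ A \subset D0, #|A| = t &
  (\sum_(i in S) (#|X i| - l) <= 4 * (N - l) * #|cov A|)%N].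
Proof.
have /fin_all_exists [E hE] := fun i => matching (val i) K (X i).
have cardcov (A : {set T}) : #|cov A| = \sum_(i in S) (i \in cov A).
  rewrite -sum1_card [LHS]big_mkcond [RHS]big_mkcond; apply: eq_bigr => i _.
  by rewrite !inE; case: (i \in S).
have peri i : i \in S -> (Phi * (#|X i| - l) <= 4 * (N - l) * \sum_(A in F) (i \in cov A))%N.
  move=> iS; have [E1 E2 E3 E4] := hE i.
  have := per_i iS E1 E2 E3 => h.
  apply: (@leq_trans (2 * (N - l) * (#|E i| * P2))); last first.
    have -> : (4 * (N - l) * \sum_(A in F) (i \in cov A) = 2 * (N - l) * (2 * \sum_(A in F) (i \in cov A)))%N by ring.
    by apply: leq_mul.
  have xN : (#|X i| <= N)%N by apply: subset_leq_card; apply: XD.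
  case: E4 => [eK|hX].
    rewrite eK; have := twoK => h2.
    have h3 : (#|X i| - l <= N - l)%N by lia.
    have := leq_mul h2 h3; move=> h4.
    have -> : (2 * (N - l) * (K * P2) = 2 * K * P2 * (N - l))%N by ring.
    exact: h4.
  have := Xl iS => h5.
  have h3 : (#|X i| - l <= 2 * #|E i|)%N by lia.
  have := leq_mul P2l h3 => h4.
  have -> : (2 * (N - l) * (#|E i| * P2) = P2 * (N - l) * (2 * #|E i|))%N by ring.
  exact: h4.
set V := (\sum_(i in S) (#|X i| - l))%N.
have main : (Phi * V <= \sum_(A in F) (4 * (N - l) * #|cov A|))%N.
  rewrite /V big_distrr /=.
  have -> : (\sum_(A in F) 4 * (N - l) * #|cov A| = \sum_(i in S) 4 * (N - l) * \sum_(A in F) (i \in cov A))%N.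
    under eq_bigr => A _ do rewrite cardcov big_distrr /=.
    by rewrite exchange_big /=; apply: eq_bigr => i _; rewrite big_distrr.
  by apply: leq_sum => i iS; apply: peri.
case: (boolP [exists A in F, V <= 4 * (N - l) * #|cov A|]).
  move=> /exists_inP [A]; rewrite inE => /andP [AD /eqP At] h.
  by exists A.
rewrite negb_exists_in => /forall_inP hA.
have Fne : (0 < #|F|)%N by rewrite cardF Phi_pos.
have [A0 A0F] : exists A0, A0 \in F by move/card_gt0P: Fne => [A0 h]; exists A0.
have Vpos : (0 < V)%N by move: (hA A0 A0F); rewrite -ltnNge; lia.
have : (\sum_(A in F) (4 * (N - l) * #|cov A|) <= \sum_(A in F) V.-1)%N.
  by apply: leq_sum => A AF; move: (hA A AF); rewrite -ltnNge; lia.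
rewrite sum_nat_const cardF => h.
have := leq_trans main h; have := Phi_pos; nia.
Qed.

End Core.
Unset Implicit Arguments.
Local Open Scope ring_scope.
Lemma natrB_ge (R : realType) (a b : nat) : (a%:R - b%:R : R) <= (a - b)%N%:R.
Proof.
case: (leqP b a) => h; first by rewrite natrB.
have -> : (a - b)%N = 0%N by lia.
rewrite subr_le0 ler_nat; lia.
Qed.

Lemma sq_ge2 (R : realType) (s : R) : 0 <= s -> 4 <= s ^+ 2 -> 2 <= s.
Proof. move=> s0 h; rewrite expr2 in h; nra. Qed.

Lemma sq81 (R : realType) (s T : R) : 0 <= s -> 9 * s <= T - 1 ->
  81 * s ^+ 2 <= T * (T - 1).
Proof.
move=> s0 h; have h1 : 0 <= 9 * s by lra.
have := ler_pM h1 h1 h h => h2.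
have : (T - 1) * (T - 1) <= T * (T - 1) by rewrite ler_wpM2r; lra.
rewrite expr2; lra.
Qed.

Lemma final_real (R : realType) (rho Nr lr mr cr : R) :
  0 <= rho -> rho < 1 -> lr < Nr -> lr <= Nr * (1 - rho) ^+ 2 -> 0 <= mr ->
  Nr * (1 - rho) * mr - lr * mr <= 4 * (Nr - lr) * cr ->
  (1 - rho) / (2 - rho) * mr / 4 <= cr.
Proof.
move=> r0 r1 lN hl m0 h.
have p2 : 0 < 2 - rho by lra.
have q : (Nr - lr) * (1 - rho) <= (Nr * (1 - rho) - lr) * (2 - rho).
  have -> : (Nr * (1 - rho) - lr) * (2 - rho) = (Nr - lr) * (1 - rho) + (Nr * (1 - rho) ^+ 2 - lr) by ring.
  lra.
have q2 : (Nr - lr) * ((1 - rho) * mr) <= (Nr - lr) * (4 * (2 - rho) * cr).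
  have := ler_wpM2r m0 q => q'.
  have := ler_wpM2r (ltW p2) h => h'.
  have e1 : (Nr * (1 - rho) * mr - lr * mr) * (2 - rho) = (Nr * (1 - rho) - lr) * (2 - rho) * mr by ring.
  rewrite e1 in h'.
  have e2 : (Nr - lr) * (1 - rho) * mr = (Nr - lr) * ((1 - rho) * mr) by ring.
  have e3 : 4 * (Nr - lr) * cr * (2 - rho) = (Nr - lr) * (4 * (2 - rho) * cr) by ring.
  rewrite e2 in q'; rewrite e3 in h'.
  exact: le_trans q' h'.
rewrite ler_pM2l in q2; last lra.
have -> : (1 - rho) / (2 - rho) * mr / 4 = ((1 - rho) * mr) / (4 * (2 - rho)).
  by field; lra.
rewrite ler_pdivrMr; last by apply: mulr_gt0; lra.
by rewrite [cr * _]mulrC.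
Qed.

Lemma Nrho (R : realType) (alpha rho Nr lr : R) :
  0 <= lr -> lr * (1 + alpha) < Nr -> 1 < (1 + alpha) * (1 - rho) ^+ 2 ->
  lr <= Nr * (1 - rho) ^+ 2.
Proof.
move=> l0 h g.
have s0 : 0 <= (1 - rho) ^+ 2 by exact: sqr_ge0.
have := ler_wpM2r s0 (ltW h) => h2.
have : lr * 1 <= lr * ((1 + alpha) * (1 - rho) ^+ 2) by rewrite ler_wpM2l // ltW.
rewrite mulr1 mulrA in h2 *; lra.
Qed.

Theorem mainTheorem3 (R : realType) (alpha rho : R) (l n q : nat)
    (C : {set word n q}) (S : {set 'I_n}) :
  0 < alpha -> alpha < 1 ->
  0 <= rho -> rho < 1 - (Num.sqrt (1 + alpha))^-1 ->
  (0 < l)%N ->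
  4 / ((1 + alpha) * (1 - rho) ^+ 2 - 1) <= l%:R ->
  ~ list_recoverable S (puncture C S) rho l (l%:R * (1 + alpha)) ->
  exists C' : {set sword n q},
    [/\ C' \subset puncture C S,
        #|C'|%:R <= 10 * Num.sqrt (l%:R / ((1 + alpha) * (1 - rho) ^+ 2 - 1))
      & (1 - rho) / (2 - rho) * #|S|%:R / 4 <= #|collide S C'|%:R].
Proof.
move=> a0 a1 r0 rlt l0 lg nLR.
set g := (1 + alpha) * (1 - rho) ^+ 2 - 1.
have sq0 : 0 < Num.sqrt (1 + alpha) by rewrite sqrtr_gt0; lra.
have rho1 : rho < 1.
  have : 0 < (Num.sqrt (1 + alpha))^-1 by rewrite invr_gt0.
  lra.
have g0 : 0 < g.
  have h : 1 / Num.sqrt (1 + alpha) < 1 - rho by rewrite div1r; lra.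
  rewrite ltr_pdivrMr // in h.
  have h2 : 1 < ((1 - rho) * Num.sqrt (1 + alpha)) ^+ 2.
    have := h; set x := _ * _; move=> hx; nra.
  rewrite exprMn sqr_sqrtr in h2; last lra.
  rewrite /g; lra.
have ga : g <= alpha.
  have : (1 - rho) ^+ 2 <= 1.
    have h1 : 0 <= 1 - rho by lra.
    have h2 : 1 - rho <= 1 by lra.
    rewrite expr2; nra.
  rewrite /g => h; nra.
have lgam : 4 <= l%:R * g by rewrite -ler_pdivrMr.
have l4 : (4 < l)%N by rewrite -(ltr_nat R); nra.

have [A [Al Abig]] : exists A : 'I_n -> {set 'I_q},
    (forall i, i \in S -> (#|A i| <= l)%N) /\
    l%:R * (1 + alpha) < #|[set c in puncture C S | #|disagree S A c|%:R <= rho * #|S|%:R]|%:R.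
  apply: NNPP => H; apply: nLR => A HA; rewrite leNgt; apply/negP => H'; apply: H.
  by exists A.
set D := [set c in puncture C S | _] in Abig.
set x := l%:R * (1 + alpha) in Abig.
have x0 : 0 <= x by rewrite /x; apply: mulr_ge0; [exact: ler0n | lra].
set N := (Num.truncn x).+1.
have [Nlo Nhi] : x < N%:R /\ N%:R <= x + 1.
  have /andP[h1 h2] := truncn_itv x0; split => //.
  by rewrite /N -natr1; lra.
have ND : (N <= #|D|)%N.
  have /andP[h1 _] := truncn_itv x0.
  by rewrite /N -(ltr_nat R); exact: le_lt_trans h1 Abig.
have [D0 [D0D cD0]] : exists D0 : {set sword n q}, D0 \subset D /\ #|D0| = N.
  have : (0 < #|[set B : {set sword n q} | B \subset D & #|B| == N]|)%N by rewrite cards_draws bin_gt0.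
  by move/card_gt0P => [B]; rewrite inE => /andP[h1 /eqP h2]; exists B.

have lx : l%:R < x.
  rewrite /x mulrDr mulr1 ltrDl; apply: mulr_gt0 => //; by rewrite ltr0n.
have lN : (l < N)%N by rewrite -(ltr_nat R); lra.
have N4 : (4 <= N)%N by apply: leq_trans (ltnW l4) (ltnW lN).
pose s := Num.sqrt (l%:R / g).
have lg0 : 0 <= l%:R / g by apply: divr_ge0; [exact: ler0n | lra].
have s2 : s ^+ 2 = l%:R / g by rewrite sqr_sqrtr.
have s0 : 0 <= s by exact: sqrtr_ge0.
have sge2 : 2 <= s.
  have : 4 <= l%:R / g.
    rewrite ler_pdivlMr //; have : (4 < l%:R :> R) by rewrite ltr_nat.
    lra.
  by rewrite -s2; apply: sq_ge2.
have s10 : 0 <= 10 * s by lra.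
pose t0 := Num.truncn (10 * s).
have /andP[t0lo t0hi] := truncn_itv s10.
have t0h : 10 * s < t0%:R + 1 by rewrite natr1.
have t020 : (19 < t0)%N.
  have h : (19%:R < t0%:R :> R).
    have h' : 10 * s < t0%:R + 1 by rewrite natr1.
    lra.
  by rewrite ltr_nat in h.
pose t := minn t0 N.
have t4 : (4 <= t)%N by rewrite leq_min N4 andbT; apply: leq_trans t020.
have tN : (t <= N)%N by exact: geq_minr.
have key : (N * (N - 1) <= t * (t - 1) * (N - l))%N.
  case: (leqP t0 N) => ht.
    have -> : t = t0 by rewrite /t; apply/minn_idPl.
    have N1 : (1 <= N)%N by apply: leq_trans N4.
    have t01 : (1 <= t0)%N by apply: leq_trans t020.
    have lN' : (l <= N)%N := ltnW lN.
    rewrite -(ler_nat R) !natrM !natrB //.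
    set T0 := (t0%:R : R); set Nr := (N%:R : R); set lr := (l%:R : R).
    have h1 : 9 * s <= T0 - 1 by rewrite /T0; lra.
    have h2 : 81 * s ^+ 2 <= T0 * (T0 - 1) by apply: sq81.
    have h3 : lr * g <= Nr - lr.
      have : lr * g <= lr * alpha by rewrite ler_wpM2l // ler0n.
      rewrite /x -/lr mulrDr mulr1 in Nlo; lra.
    have h4 : s ^+ 2 * g = lr by rewrite s2 divfK //; apply: lt0r_neq0.
    have h5 : 81 * lr * lr <= T0 * (T0 - 1) * (Nr - lr).
      have e : 81 * lr * lr = (81 * s ^+ 2) * (lr * g) by rewrite -h4; ring.
      rewrite e; apply: ler_pM => //.
        by apply: mulr_ge0; [lra | exact: sqr_ge0].
      by apply: mulr_ge0; [exact: ler0n | lra].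
    have lr1 : 1 <= lr by rewrite /lr ler1n; apply: leq_trans (ltnW l4).
    have h6 : Nr * (Nr - 1) <= 81 * lr * lr.
      have hN : Nr <= 3 * lr.
        rewrite /x -/lr mulrDr mulr1 in Nhi.
        have : lr * alpha <= lr * 1 by rewrite ler_wpM2l ?ler0n //; lra.
        lra.
      have hN0 : 0 <= Nr by exact: ler0n.
      have : Nr * (Nr - 1) <= Nr * Nr by rewrite ler_wpM2l //; lra.
      have := ler_pM hN0 hN0 hN hN.
      have -> : 3 * lr * (3 * lr) = 9 * (lr * lr) by ring.
      have -> : 81 * lr * lr = 81 * (lr * lr) by ring.
      have : 0 <= lr * lr by apply: mulr_ge0; lra.
      lra.
    exact: le_trans h6 h5.
  have -> : t = N by rewrite /t; apply/minn_idPr; apply: ltnW.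
  by apply: leq_pmulr; rewrite subn_gt0.
pose X (i : 'I_n) := [set c in D0 | c i \in [set Some y | y in A i]].
have XD i : i \in S -> X i \subset D0.
  by move=> _; apply/subsetP => c; rewrite inE => /andP[].
have Xl i : i \in S -> (#|[set (fun (i : 'I_n) (c : sword n q) => c i) i c | c in X i]| <= l)%N.
  move=> iS; apply: leq_trans (Al _ iS).
  rewrite -(card_imset (A i) (@Some_inj _)); apply: subset_leq_card.
  by apply/subsetP => y /imsetP [c]; rewrite inE => /andP[_ h] ->.
rewrite -cD0 in tN lN key.
have [A' [A'D cA' hA']] := core XD Xl t4 tN lN key.
have DP : D \subset puncture C S by apply/subsetP => c; rewrite inE => /andP[].
exists A'; split.
- exact: subset_trans A'D (subset_trans D0D DP).
- rewrite cA'; apply: le_trans t0lo; rewrite ler_nat; exact: geq_minl.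
have hc : cov (fun (i : 'I_n) (c : sword n q) => c i) S A' = collide S A'.
  by apply/setP => i; rewrite !inE.
rewrite hc in hA'.
have agree c : c \in D0 ->
    #|[set i in S | c i \in [set Some y | y in A i]]| = (#|S| - #|disagree S A c|)%N.
  move=> cin; have := subsetP DP _ (subsetP D0D _ cin) => /imsetP [w _ ->].
  have -> : [set i in S | restrict S w i \in [set Some y | y in A i]] =
      S :\: disagree S A (restrict S w).
    apply/setP => i; rewrite !inE /restrict !ffunE; case iS: (i \in S) => //=.
    by rewrite (mem_imset _ _ (@Some_inj _)) negbK andbT.
  rewrite cardsD (setIidPr _) //.
  by apply/subsetP => i; rewrite inE => /andP[].
have cX i : #|X i| = (\sum_(c in D0) (c i \in [set Some y | y in A i] : nat))%N.
  rewrite -sum1_card [LHS]big_mkcond [RHS]big_mkcond; apply: eq_bigr => c _.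
  by rewrite !inE; case: (c \in D0); case: (_ \in _).
have cY c : #|[set i in S | c i \in [set Some y | y in A i]]| =
    (\sum_(i in S) (c i \in [set Some y | y in A i] : nat))%N.
  rewrite -sum1_card [LHS]big_mkcond [RHS]big_mkcond; apply: eq_bigr => i _.
  by rewrite !inE; case: (i \in S); case: (_ \in _).
have sumX : (\sum_(i in S) #|X i| = \sum_(c in D0) (#|S| - #|disagree S A c|))%N.
  under eq_bigr => i _ do rewrite cX.
  rewrite exchange_big /=; apply: eq_bigr => c cin.
  by rewrite -agree // cY.
have sumR : #|D0|%:R * (#|S|%:R - rho * #|S|%:R) <= \sum_(i in S) (#|X i|%:R : R).
  rewrite -natr_sum sumX natr_sum.
  apply: le_trans (_ : _ <= \sum_(c in D0) (#|S|%:R - rho * #|S|%:R)) _.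
    by rewrite sumr_const mulr_natl.
  apply: ler_sum => c cin; apply: le_trans (natrB_ge _ _ _).
  have : c \in D by apply: (subsetP D0D).
  rewrite inE => /andP[_ h]; lra.
have Vr : \sum_(i in S) (#|X i|%:R : R) - #|S|%:R * l%:R <=
    (\sum_(i in S) (#|X i| - l))%N%:R.
  rewrite natr_sum mulr_natl -sumr_const -sumrB.
  by apply: ler_sum => i _; apply: natrB_ge.
have hR := hA'; rewrite -(ler_nat R) !natrM natrB ?(ltnW lN) // in hR.
apply: (@final_real R rho #|D0|%:R l%:R #|S|%:R) => //.
- by rewrite ltr_nat.
- apply: (@Nrho R alpha rho #|D0|%:R l%:R); first exact: ler0n.
    by rewrite cD0.
  by have := g0; rewrite /g => h; lra.
- apply: le_trans hR; move: sumR Vr; set u := \sum_(i in S) _; move=> sumR Vr.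
  have -> : #|D0|%:R * (1 - rho) * #|S|%:R - l%:R * #|S|%:R =
    #|D0|%:R * (#|S|%:R - rho * #|S|%:R) - #|S|%:R * (l%:R : R) by ring.
  lra.
Qed.
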